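(* Let $x\in H$ with $\langle x,R_0x\rangle>0$. Then the random variables $A_k(\omega)=\langle x,\Delta_k(\omega)x\rangle$, $k\ge1$, are nonnegative and $\nu_x$-integrable, and $\langle x,R_0x\rangle=\mathbb E_{\nu_x}[\langle x,R_\infty(\omega)x\rangle]+\sum_{k=1}^\infty\mathbb E_{\nu_x}[A_k]$. In particular $\sum_{k=1}^\infty\mathbb E_{\nu_x}[A_k]=\langle x,R_0x\rangle-\mathbb E_{\nu_x}[\langle x,R_\infty(\omega)x\rangle]<\infty$.
   Context: Let $H$ be a complex Hilbert space, $m\ge2$, $P_1,\dots,P_m$ orthogonal projections on $H$, $R_0\in B(H)_+$. Let $\mathcal A=\{1,\dots,m\}$, $\mathcal W$ the set of finite words over $\mathcal A$ (including the empty word $\emptyset$); for nonempty $w=j_1\cdots j_n$, $w^-=j_1\cdots j_{n-1}$, and $wj$ is concatenation. WR energy tree: $R_\emptyset=R_0$, and for $w=j_1\cdots j_n$, $n\ge1$, $R_w=R_{w^-}^{1/2}(I-P_{j_n})R_{w^-}^{1/2}$, $D_w=R_{w^-}^{1/2}P_{j_n}R_{w^-}^{1/2}$. $\Omega=\mathcal A^{\mathbb N}$; for $\omega=(j_1,j_2,\dots)$, $\omega|_n=j_1\cdots j_n$, $\omega|_0=\emptyset$; cylinders $[w]=\{\omega:\omega|_{|w|}=w\}$. $R_\infty(\omega)$ is the strong limit of the Loewner-decreasing sequence $R_{\omega|_n}$. The step-$k$ dissipated operator along $\omega$ is $\Delta_k(\omega)=D_{\omega|_k}=R_{\omega|_{k-1}}^{1/2}P_{j_k}R_{\omega|_{k-1}}^{1/2}$.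 Energy-biased path measure: with $x$ fixed, $a_{wj}=\langle x,D_{wj}x\rangle$, a fixed probability vector $q$ on $\mathcal A$, $p_x(j\mid w)=a_{wj}/\sum_k a_{wk}$ if $\sum_ka_{wk}>0$ and $p_x(j\mid w)=q_j$ otherwise; $\nu_x$ is the unique Borel probability measure on $\Omega$ with $\nu_x([j_1\cdots j_n])=\prod_{i=1}^n p_x(j_i\mid j_1\cdots j_{i-1})$. *)

(* Defs.v *)
From HB Require Import structures.
From mathcomp Require Import all_boot all_order all_algebra.
From mathcomp Require Import complex.
From mathcomp Require Import all_classical all_reals all_analysis.
Import Order.TTheory GRing.Theory Num.Theory.

Set Implicit Arguments.
Unset Strict Implicit.
Unset Printing Implicit Defensive.

Local Open Scope ring_scope.
Local Open Scope classical_set_scope.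

Section Hilbert.
Variable R : realType.
Variable V : lmodType R[i].
Variable ip : V -> V -> R[i].

Definition is_inner_product : Prop :=
  [/\ (forall (u v w : V) (a : R[i]), ip u (a *: v + w) = a * ip u v + ip u w),
      (forall u v : V, ip v u = (ip u v)^*),
      (forall u : V, 0 <= ip u u) &
      (forall u : V, ip u u = 0 -> u = 0)].

Definition hnorm (v : V) : R := Num.sqrt (complex.Re (ip v v)).

Definition hcomplete : Prop :=
  forall u : nat -> V,
    (forall e : R, 0 < e -> exists N : nat, forall n k : nat,
        (N <= n)%N -> (N <= k)%N -> hnorm (u n - u k) < e) ->
    exists l : V, forall e : R, 0 < e -> exists N : nat, forall n : nat,
        (N <= n)%N -> hnorm (u n - l) < e.

Definition is_hilbert : Prop := is_inner_product /\ hcomplete.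

Definition bounded_op (T : V -> V) : Prop :=
  (forall (a : R[i]) (u v : V), T (a *: u + v) = a *: T u + T v) /\
  exists M : R, forall v : V, hnorm (T v) <= M * hnorm v.

(* T \in B(H)_+ : bounded and <v, T v> >= 0 (real, nonnegative) for all v *)
Definition positive_op (T : V -> V) : Prop :=
  bounded_op T /\ forall v : V, 0 <= ip v (T v).

Definition orth_proj (P : V -> V) : Prop :=
  [/\ bounded_op P, (forall v, P (P v) = P v) &
      (forall u v, ip (P u) v = ip u (P v))].

Definition is_pos_sqrt (A S : V -> V) : Prop :=
  positive_op S /\ forall v, S (S v) = A v.

(* A^{1/2}: the (unique) positive square root of A (for A positive it       *)
(* exists and is unique; the default value 0 is never used in that case).   *)
Definition opsqrt (A : V -> V) : V -> V :=
  match pselect (exists S, is_pos_sqrt A S) with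
  | left h => proj1_sig (cid h)
  | right _ => fun _ => 0
  end.

Definition strong_limit (T : nat -> V -> V) (L : V -> V) : Prop :=
  forall (v : V) (e : R), 0 < e -> exists N : nat, forall n : nat,
    (N <= n)%N -> hnorm (T n v - L v) < e.

(* the strong limit of T (default 0 if it does not exist) *)
Definition slim (T : nat -> V -> V) : V -> V :=
  match pselect (exists L, strong_limit T L) with
  | left h => proj1_sig (cid h)
  | right _ => fun _ => 0
  end.

(* Since w^- drops the LAST letter, we recurse on the reversed word.         *)
Variable m : nat.
Variable P : 'I_m -> V -> V.
Variable R0 : V -> V.

Fixpoint Rrev (l : seq 'I_m) : V -> V :=
  match l with
  | [::] => R0
  | j :: l' => let S := opsqrt (Rrev l') in fun v => S (S v - P j (S v))
  end.

(* R_w = R_{w^-}^{1/2} (I - P_{j_n}) R_{w^-}^{1/2},  R_emptyset = R0 *)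
Definition Rw (w : seq 'I_m) : V -> V := Rrev (rev w).

(* D_w = R_{w^-}^{1/2} P_{j_n} R_{w^-}^{1/2} (w nonempty; D_emptyset := 0, unused) *)
Definition Dw (w : seq 'I_m) : V -> V :=
  match rev w with
  | [::] => fun _ => 0
  | j :: l => let S := opsqrt (Rrev l) in fun v => S (P j (S v))
  end.

Definition prefix (om : nat -> 'I_m) (n : nat) : seq 'I_m := mkseq om n.

Definition Rinf (om : nat -> 'I_m) : V -> V := slim (fun n => Rw (prefix om n)).

Definition Delta (k : nat) (om : nat -> 'I_m) : V -> V := Dw (prefix om k).

Variable x : V.
Variable q : 'I_m -> R.

Definition aw (w : seq 'I_m) (j : 'I_m) : R := complex.Re (ip x (Dw (rcons w j) x)).

Definition px (w : seq 'I_m) (j : 'I_m) : R :=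
  let s := \sum_(k < m) aw w k in
  if 0 < s then aw w j / s else q j.

(* cylprob_rev l = prod_{i=1}^{n} p_x(j_i | j_1...j_{i-1}) for w = rev l *)
Fixpoint cylprob_rev (l : seq 'I_m) : R :=
  match l with
  | [::] => 1
  | j :: l' => cylprob_rev l' * px (rev l') j
  end.

Definition cylprob (w : seq 'I_m) : R := cylprob_rev (rev w).

End Hilbert.

(* Path space Omega = A^N for the alphabet A = 'I_(n.+2) (so m = n+2 >= 2),   *)
(* with the sigma-algebra generated by the cylinders (= Borel sigma-algebra  *)
(* of the product topology).                                                 *)
Definition Seqs (n : nat) := nat -> 'I_n.+2.
HB.instance Definition _ n := gen_eqMixin (Seqs n).
HB.instance Definition _ n := gen_choiceMixin (Seqs n).
HB.instance Definition _ n := isPointed.Build (Seqs n) (fun _ => ord0).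

Definition cylinder (n : nat) (w : seq 'I_n.+2) : set (Seqs n) :=
  [set om | prefix om (size w) = w].

Definition cylinders (n : nat) : set (set (Seqs n)) := range (@cylinder n).

Notation Omega n := (g_sigma_algebraType (@cylinders n)).

(* Main.v *)
Require Import Defs.
From HB Require Import structures.
From mathcomp Require Import all_boot all_order all_algebra.
From mathcomp Require Import complex.
From mathcomp Require Import all_classical all_reals all_analysis.
From mathcomp Require Import ring lra.
Import Order.TTheory GRing.Theory Num.Theory.
Import numFieldNormedType.Exports.
Local Open Scope complex_scope.
Local Open Scope ring_scope.
Local Open Scope classical_set_scope.
Set Implicit Arguments.
Unset Strict Implicit.
Unset Printing Implicit Defensive.
Section Cplx.
Variable R : realType.
Local Notation C := R[i].
Lemma conjE (z : C) : z^* = conjc z. Proof. by []. Qed.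
Lemma ReD (a b : C) : complex.Re (a + b) = complex.Re a + complex.Re b.
Proof. by case: a; case: b. Qed.
Lemma ImD (a b : C) : complex.Im (a + b) = complex.Im a + complex.Im b.
Proof. by case: a; case: b. Qed.
Lemma ReN (a : C) : complex.Re (- a) = - complex.Re a.
Proof. by case: a. Qed.
Lemma ImN (a : C) : complex.Im (- a) = - complex.Im a.
Proof. by case: a. Qed.
Lemma ReB (a b : C) : complex.Re (a - b) = complex.Re a - complex.Re b.
Proof. by rewrite ReD ReN. Qed.
Lemma ImB (a b : C) : complex.Im (a - b) = complex.Im a - complex.Im b.
Proof. by rewrite ImD ImN. Qed.
Lemma ReMc (a b : C) : complex.Re (a * b) = complex.Re a * complex.Re b - complex.Im a * complex.Im b.
Proof. by case: a => ? ?; case: b. Qed.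
Lemma ImMc (a b : C) : complex.Im (a * b) = complex.Re a * complex.Im b + complex.Im a * complex.Re b.
Proof. by case: a => ? ?; case: b. Qed.
Lemma ReR (r : R) : complex.Re (r%:C) = r. Proof. by []. Qed.
Lemma ImR (r : R) : complex.Im (r%:C) = 0. Proof. by []. Qed.
Lemma ReJ (a : C) : complex.Re (a^*) = complex.Re a. Proof. by case: a. Qed.
Lemma ImJ (a : C) : complex.Im (a^*) = - complex.Im a. Proof. by case: a. Qed.
Lemma ge0E (z : C) : (0 <= z) = (complex.Im z == 0) && (0 <= complex.Re z).
Proof. by rewrite lecE eq_sym. Qed.
Lemma leCE (z w : C) : (z <= w) = (complex.Im z == complex.Im w) && (complex.Re z <= complex.Re w).
Proof. by rewrite lecE eq_sym. Qed.
Lemma ge0_real (z : C) : 0 <= z -> z = (complex.Re z)%:C.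
Proof. by case: z => a b; rewrite ge0E /= => /andP[/eqP -> _]. Qed.
Lemma ge0_Re (z : C) : 0 <= z -> 0 <= complex.Re z.
Proof. by rewrite ge0E => /andP[]. Qed.
Lemma ge0_Im (z : C) : 0 <= z -> complex.Im z = 0.
Proof. by rewrite ge0E => /andP[/eqP]. Qed.
Lemma realC_ge0 (r : R) : (0 <= r%:C) = (0 <= r).
Proof. by rewrite ge0E /= eqxx. Qed.
Lemma nzE (a : C) : complex.Re (a * a^*) = complex.Re a ^+ 2 + complex.Im a ^+ 2.
Proof. by case: a => x y /=; rewrite /= mulrN opprK !expr2. Qed.
Lemma ImMJ (a : C) : complex.Im (a * a^*) = 0.
Proof. by case: a => x y /=; rewrite mulrN [y * x]mulrC addNr. Qed.
Lemma nz_ge0 (a : C) : 0 <= complex.Re (a * a^*).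
Proof. by rewrite nzE addr_ge0 // sqr_ge0. Qed.
Lemma Re2_le_nz (a : C) : complex.Re a ^+ 2 <= complex.Re (a * a^*).
Proof. by rewrite nzE lerDl sqr_ge0. Qed.
Lemma Im2_le_nz (a : C) : complex.Im a ^+ 2 <= complex.Re (a * a^*).
Proof. by rewrite nzE lerDr sqr_ge0. Qed.
Lemma conjD (a b : C) : (a + b)^* = a^* + b^*.
Proof. by case: a => ? ?; case: b => ? ?; rewrite !conjE /= opprD. Qed.
Lemma conjN (a : C) : (- a)^* = - a^*.
Proof. by case: a => ? ?; rewrite !conjE. Qed.
Lemma conjM (a b : C) : (a * b)^* = a^* * b^*.
Proof. by case: a => ? ?; case: b => ? ?; rewrite !conjE /=; congr (_ +i* _); ring. Qed.
Lemma conjK (a : C) : (a^*)^* = a.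
Proof. by case: a => ? ?; rewrite !conjE /= opprK. Qed.
Lemma conjR (r : R) : (r%:C)^* = r%:C.
Proof. by rewrite conjE /= oppr0. Qed.
End Cplx.

Lemma quad (R : realType) (F G N : R) : 0 <= F -> 0 <= G -> 0 <= N ->
  (forall t, 0 <= F - 2 * t * N + t ^+ 2 * N * G) -> N <= F * G.
Proof.
move=> F0 G0 N0 h.
have [GE|Gn] := eqVneq G 0.
  rewrite GE mulr0; have [NE|Nn] := eqVneq N 0; first by rewrite NE.
  have := h ((F + 1) / (2 * N)); rewrite GE mulr0 addr0.
  have -> : 2 * ((F + 1) / (2 * N)) * N = F + 1.
    by field; rewrite ?pnatr_eq0 ?Nn //=.
  by move=> H; exfalso; move: H; apply/negP; rewrite -ltNge; lra.
have Gp : 0 < G by rewrite lt_def Gn G0.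
have := h (G^-1).
have -> : F - 2 * G^-1 * N + G^-1 ^+ 2 * N * G = (F * G - N) / G by field.
by rewrite pmulr_lge0 ?invr_gt0 // subr_ge0.
Qed.

Section Form.
Variable R : realType.
Local Notation C := R[i].
Variable V : lmodType C.
Variable f : V -> V -> C.
Hypothesis fL : forall u a v w, f u (a *: v + w) = a * f u v + f u w.
Hypothesis fH : forall u v, f v u = (f u v)^*.

Lemma f0r u : f u 0 = 0.
Proof.
have := fL u 1 0 0; rewrite scaler0 addr0 mul1r => h.
by apply: (addrI (f u 0)); rewrite -h addr0.
Qed.
Lemma fDr u v w : f u (v + w) = f u v + f u w.
Proof. by rewrite -{1}[v]scale1r fL mul1r. Qed.
Lemma fZr u a v : f u (a *: v) = a * f u v.
Proof. by rewrite -[a *: v]addr0 fL f0r addr0. Qed.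
Lemma fNr u v : f u (- v) = - f u v.
Proof. by rewrite -scaleN1r fZr mulN1r. Qed.
Lemma fBr u v w : f u (v - w) = f u v - f u w.
Proof. by rewrite fDr fNr. Qed.
Lemma f0l u : f 0 u = 0.
Proof. by rewrite fH f0r conjC0. Qed.
Lemma fDl u v w : f (v + w) u = f v u + f w u.
Proof. by rewrite fH fDr conjD -!fH. Qed.
Lemma fZl u a v : f (a *: v) u = a^* * f v u.
Proof. by rewrite fH fZr conjM -fH. Qed.
Lemma fNl u v : f (- v) u = - f v u.
Proof. by rewrite fH fNr conjN -fH. Qed.
Lemma fBl u v w : f (v - w) u = f v u - f w u.
Proof. by rewrite fDl fNl. Qed.
Lemma fsumr u I (r : seq I) (Pr : pred I) (F : I -> V) :
  f u (\sum_(i <- r | Pr i) F i) = \sum_(i <- r | Pr i) f u (F i).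
Proof. by apply: (big_morph (f u)); [exact: fDr | exact: f0r]. Qed.

Hypothesis fP : forall u, 0 <= f u u.

Lemma fexpand u s v : f (u + s *: v) (u + s *: v) =
  f u u + s * f u v + s^* * (f u v)^* + s * s^* * f v v.
Proof.
rewrite fDl !fDr !fZr !fZl (fH u v); ring.
Qed.

Lemma CSgen u v : complex.Re (f u v * (f u v)^*) <= complex.Re (f u u) * complex.Re (f v v).
Proof.
set a := f u v.
apply: quad; [exact: ge0_Re | exact: ge0_Re | exact: nz_ge0 |] => t.
have := fP (u + (- (t%:C * a^*)) *: v).
rewrite fexpand ge0E => /andP[_].
rewrite (ge0_real (fP u)) (ge0_real (fP v)) -/a.
case: a => ar ai; rewrite /= => h.
apply: (le_trans h); rewrite le_eqVlt; apply/orP; left; apply/eqP.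
rewrite !expr2; ring.
Qed.
End Form.
Section RealAux.
Variable R : realType.
Lemma cvg_eps (u : nat -> R) l : u @ \oo --> l ->
  forall e, 0 < e -> exists N, forall k, (N <= k)%N -> `|l - u k| < e.
Proof.
move/cvgrPdist_lt => h e e0; have [N _ hN] := h e e0; exists N => k hk; exact: hN.
Qed.
Lemma eps_cvg (u : nat -> R) l :
  (forall e, 0 < e -> exists N, forall k, (N <= k)%N -> `|l - u k| < e) -> u @ \oo --> l.
Proof.
move=> h; apply/cvgrPdist_lt => e e0; have [N hN] := h e e0; exists N => // k hk; exact: hN.
Qed.
Lemma dec_cauchy (u : nat -> R) : (forall k, u k.+1 <= u k) -> (forall k, 0 <= u k) ->
  forall e, 0 < e -> exists N, forall k j, (N <= k)%N -> (N <= j)%N -> `|u k - u j| < e.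
Proof.
move=> hd h0.
have lb : has_lbound (range u) by exists 0 => y [k _ <-]; exact: h0.
have cv := nonincreasing_cvgn (proj1 (nonincreasing_seqP u) hd) lb.
move=> e e0; have e2 : 0 < e / 2 by rewrite divr_gt0.
have [N hN] := cvg_eps cv e2; exists N => k j hk hj.
have := hN k hk; have := hN j hj.
set l := inf _.
move=> a b; rewrite (_ : u k - u j = (l - u j) - (l - u k)); last by ring.
apply: (le_lt_trans (ler_normB _ _)); lra.
Qed.
End RealAux.

Lemma closed0 (R : realType) (w : R[i]) : (forall e : R, 0 < e ->
  exists z, 0 <= z /\ complex.Re ((z - w) * (z - w)^*) < e) -> 0 <= w.
Proof.
move=> h.
have hI : complex.Im w = 0.
  apply/eqP; apply/negPn/negP => hn.
  have e0 : 0 < complex.Im w ^+ 2 by rewrite lt_def sqr_ge0 sqrf_eq0 hn.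
  have [z [z0 hz]] := h _ e0.
  have := Im2_le_nz (z - w); rewrite ImB (ge0_Im z0) sub0r sqrrN => h'. lra.
have hR : 0 <= complex.Re w.
  rewrite leNgt; apply/negP => hn.
  have e0 : 0 < complex.Re w ^+ 2 by rewrite lt_def sqr_ge0 sqrf_eq0 (lt_eqF hn).
  have [z [z0 hz]] := h _ e0.
  have := Re2_le_nz (z - w); rewrite ReB => h'. have := ge0_Re z0. nra.
by rewrite ge0E hI eqxx hR.
Qed.
Section SqPoly.
Variable R : realType.
Fixpoint sqpoly (k : nat) : {poly R} :=
  if k is k'.+1 then 2^-1 *: ('X + sqpoly k' * sqpoly k') else 0.
Definition nnc (p : {poly R}) := forall i, 0 <= p`_i.
Lemma nncD p q : nnc p -> nnc q -> nnc (p + q).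
Proof. by move=> hp hq i; rewrite coefD addr_ge0. Qed.
Lemma nncM p q : nnc p -> nnc q -> nnc (p * q).
Proof. by move=> hp hq i; rewrite coefM sumr_ge0 // => j _; rewrite mulr_ge0. Qed.
Lemma nncZ c p : 0 <= c -> nnc p -> nnc (c *: p).
Proof. by move=> hc hp i; rewrite coefZ mulr_ge0. Qed.
Lemma nncX : nnc 'X.
Proof. by move=> i; rewrite coefX ler0n. Qed.
Lemma nnc0 : nnc 0.
Proof. by move=> i; rewrite coef0. Qed.
Lemma sqpoly_nn k : nnc (sqpoly k).
Proof.
elim: k => [|k IH] /=; first exact: nnc0.
by apply: nncZ; [rewrite invr_ge0 ler0n | apply: nncD; [exact: nncX | exact: nncM]].
Qed.
Lemma sqdiff k : nnc (sqpoly k.+1 - sqpoly k).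
Proof.
elim: k => [|k IH].
  by rewrite /= subr0; apply: nncZ; [rewrite invr_ge0 ler0n | rewrite mul0r addr0; exact: nncX].
have -> : sqpoly k.+2 - sqpoly k.+1 =
   2^-1 *: ((sqpoly k.+1 - sqpoly k) * (sqpoly k.+1 + sqpoly k)).
  rewrite [sqpoly k.+2]/= [in LHS](_ : sqpoly k.+1 = 2^-1 *: ('X + sqpoly k * sqpoly k)) //.
  rewrite -scalerBr; congr (_ *: _).
  rewrite [in RHS](_ : sqpoly k.+1 = 2^-1 *: ('X + sqpoly k * sqpoly k)) //.
  by rewrite -!mul_polyC; ring.
apply: nncZ; first by rewrite invr_ge0 ler0n.
by apply: nncM => //; apply: nncD => //; exact: sqpoly_nn.
Qed.
End SqPoly.
Section Hilb.
Variable R : realType.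
Local Notation C := R[i].
Variable V : lmodType C.
Variable ip : V -> V -> C.
Hypothesis hip : is_inner_product ip.

Let ipL : forall u a v w, ip u (a *: v + w) = a * ip u v + ip u w.
Proof. by case: hip. Qed.
Let ipH : forall u v, ip v u = (ip u v)^*.
Proof. by case: hip. Qed.
Let ipP : forall u, 0 <= ip u u.
Proof. by case: hip. Qed.
Let ipD : forall u, ip u u = 0 -> u = 0.
Proof. by case: hip. Qed.

Definition nrm2 (v : V) : R := complex.Re (ip v v).

Lemma ip_self v : ip v v = (nrm2 v)%:C.
Proof. exact: ge0_real. Qed.
Lemma nrm2_ge0 v : 0 <= nrm2 v.
Proof. exact: ge0_Re. Qed.
Lemma nrm2_eq0 v : nrm2 v = 0 -> v = 0.
Proof. by move=> h; apply: ipD; rewrite ip_self h. Qed.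
Lemma nrm2N v : nrm2 (- v) = nrm2 v.
Proof. by rewrite /nrm2 (fNl ipL ipH) (fNr ipL) opprK. Qed.
Lemma nrm2Z a v : nrm2 (a *: v) = complex.Re (a * a^*) * nrm2 v.
Proof.
rewrite /nrm2 (fZl ipL ipH) (fZr ipL) ip_self mulrA [a^* * a]mulrC.
by rewrite ReMc ImMJ ReR ImR mulr0 subr0.
Qed.
Lemma nrm2ZR (r : R) v : nrm2 (r%:C *: v) = r ^+ 2 * nrm2 v.
Proof. by rewrite nrm2Z conjR /= mulr0 subr0 expr2. Qed.
Lemma parallelogram u v : nrm2 (u + v) + nrm2 (u - v) = 2 * nrm2 u + 2 * nrm2 v.
Proof.
rewrite /nrm2 !(fDl ipL ipH) !(fDr ipL) !(fNl ipL ipH) !(fNr ipL) !ReD !ReN; ring.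
Qed.
Lemma nrm2D u v : nrm2 (u + v) <= 2 * (nrm2 u + nrm2 v).
Proof.
have := parallelogram u v; have := nrm2_ge0 (u - v); lra.
Qed.
Lemma nrm2B u v : nrm2 (u - v) <= 2 * (nrm2 u + nrm2 v).
Proof. by rewrite -(nrm2N v); apply: nrm2D. Qed.
Lemma nrm2_sym u v : nrm2 (u - v) = nrm2 (v - u).
Proof. by rewrite -nrm2N opprB. Qed.

Lemma CS u v : complex.Re (ip u v * (ip u v)^*) <= nrm2 u * nrm2 v.
Proof. exact: (CSgen ipL ipH ipP). Qed.

Definition linop (T : V -> V) := forall a u v, T (a *: u + v) = a *: T u + T v.
Definition psd (T : V -> V) := forall v, 0 <= ip v (T v).
Definition sa (T : V -> V) := forall u v, ip (T u) v = ip u (T v).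

Section Lin.
Variable T : V -> V.
Hypothesis hT : linop T.
Lemma lin0 : T 0 = 0.
Proof.
have := hT 1 0 0; rewrite scaler0 addr0 scale1r => h.
by apply: (addrI (T 0)); rewrite -h addr0.
Qed.
Lemma linD u v : T (u + v) = T u + T v.
Proof. by rewrite -{1}[u]scale1r hT scale1r. Qed.
Lemma linZ a u : T (a *: u) = a *: T u.
Proof. by rewrite -[a *: u]addr0 hT lin0 addr0. Qed.
Lemma linN u : T (- u) = - T u.
Proof. by rewrite -scaleN1r linZ scaleN1r. Qed.
Lemma linB u v : T (u - v) = T u - T v.
Proof. by rewrite linD linN. Qed.
Lemma lin_sum I (r : seq I) (Pr : pred I) (F : I -> V) :
  T (\sum_(i <- r | Pr i) F i) = \sum_(i <- r | Pr i) T (F i).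
Proof. by apply: (big_morph T); [exact: linD | exact: lin0]. Qed.
End Lin.

Lemma psd_sa T : linop T -> psd T -> sa T.
Proof.
move=> hT hP u v.
pose d u v := ip u (T v) - ip (T u) v.
have dd w : d w w = 0.
  by rewrite /d (ipH w (T w)) (ge0_real (hP w)) conjR subrr.
have E s : d (u + s *: v) (u + s *: v) =
    d u u + s * d u v + s^* * d v u + s * s^* * d v v.
  rewrite /d (linD hT) (linZ hT) !(fDl ipL ipH) !(fDr ipL) !(fZl ipL ipH) !(fZr ipL).
  ring.
have h1 := E 1; rewrite !dd ?conjC1 ?mul1r ?mulr0 ?add0r ?addr0 in h1.
have h2 := E (Complex 0 1); rewrite !dd ?mulr0 ?add0r ?addr0 in h2.
have cI : (Complex (0:R) 1)^* = - Complex 0 1.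
  by rewrite conjE; apply/eqP; rewrite eq_complex /= oppr0 !eqxx.
rewrite cI mulNr in h2.
have iN : Complex (0:R) 1 != 0 by apply/eqP; case=> /eqP; rewrite oner_eq0.
have h3 : d u v - d v u = 0.
  have : Complex 0 1 * (d u v - d v u) = 0 by rewrite mulrBr -h2.
  by move/eqP; rewrite mulf_eq0 (negbTE iN) /= => /eqP.
have X0 : d u v = 0.
  have -> : d u v = ((d u v + d v u) + (d u v - d v u)) / 2 by field.
  by rewrite -h1 h3 addr0 mul0r.
by apply/eqP; rewrite eq_sym -subr_eq0 -/(d u v) X0.
Qed.

Lemma KL T K : linop T -> psd T -> 0 <= K ->
  (forall v, complex.Re (ip v (T v)) <= K * nrm2 v) ->
  forall v, nrm2 (T v) <= K * complex.Re (ip v (T v)).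
Proof.
move=> hT hP K0 hK v.
have hs := psd_sa hT hP.
pose g u w := ip u (T w).
have gL : forall u a v w, g u (a *: v + w) = a * g u v + g u w.
  by move=> u a v' w; rewrite /g hT ipL.
have gH : forall u w, g w u = (g u w)^*.
  by move=> u w; rewrite /g [LHS]ipH hs.
have gP : forall u, 0 <= g u u by move=> u; exact: hP.
have cs := CSgen gL gH gP v (T v).
rewrite /g -(hs v (T v)) ip_self conjR ReMc ReR ImR mulr0 subr0 in cs.
have q0 : 0 <= complex.Re (ip v (T v)) := ge0_Re (hP v).
set n := nrm2 (T v) in cs *.
set q := complex.Re (ip v (T v)) in cs q0 *.
have h2 : n * n <= (K * q) * n.
  apply: (le_trans cs); rewrite [K * q]mulrC -mulrA ler_wpM2l //.
have [n0|nn] := eqVneq n 0; first by rewrite n0 mulr_ge0.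
have np : 0 < n by rewrite lt_def nn nrm2_ge0.
by rewrite -(ler_pM2r np).
Qed.

Lemma KL2 T K : linop T -> psd T -> 0 <= K ->
  (forall v, complex.Re (ip v (T v)) <= K * nrm2 v) ->
  forall v, nrm2 (T v) <= K ^+ 2 * nrm2 v.
Proof.
move=> hT hP K0 hK v; apply: (le_trans (KL hT hP K0 hK v)).
by rewrite expr2 -mulrA ler_wpM2l.
Qed.

Lemma bounded_nrm2 T : bounded_op ip T ->
  exists M, 0 <= M /\ forall v, nrm2 (T v) <= M * nrm2 v.
Proof.
case=> _ [M hM]; exists (`|M| ^+ 2); split; first exact: exprn_ge0.
move=> v; have := hM v; rewrite /hnorm -/(nrm2 _) -/(nrm2 v) => h.
have h1 : Num.sqrt (nrm2 (T v)) <= `|M| * Num.sqrt (nrm2 v).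
  exact: (le_trans h (ler_wpM2r (sqrtr_ge0 _) (ler_norm M))).
rewrite -(sqr_sqrtr (nrm2_ge0 (T v))) -(sqr_sqrtr (nrm2_ge0 v)) -exprMn.
by rewrite lerXn2r ?nnegrE ?sqrtr_ge0 ?mulr_ge0 ?normr_ge0.
Qed.

Lemma nrm2_bounded T K : linop T -> 0 <= K ->
  (forall v, nrm2 (T v) <= K * nrm2 v) -> bounded_op ip T.
Proof.
move=> hT K0 hK; split; first exact: hT.
exists (Num.sqrt K) => v; rewrite /hnorm -/(nrm2 _) -/(nrm2 v) -sqrtrM //.
exact: ler_wsqrtr.
Qed.

Definition conv (s : nat -> V) (l : V) := forall e : R, 0 < e ->
  exists N, forall k, (N <= k)%N -> nrm2 (s k - l) < e.

Lemma hnorm_lt v e : 0 < e -> (hnorm ip v < e) = (nrm2 v < e ^+ 2).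
Proof.
move=> e0; rewrite /hnorm -/(nrm2 v) -(ltr_sqrt _ (exprn_gt0 2 e0)) sqrtr_sqr.
by rewrite gtr0_norm.
Qed.

Lemma strong_limitP T L : strong_limit ip T L <-> forall v, conv (fun k => T k v) (L v).
Proof.
split=> h v e e0.
- have se : 0 < Num.sqrt e by rewrite sqrtr_gt0.
  have [N hN] := h v _ se; exists N => k hk.
  by have := hN k hk; rewrite hnorm_lt // sqr_sqrtr // ltW.
- have [N hN] := h v (e ^+ 2) (exprn_gt0 2 e0); exists N => k hk.
  by rewrite hnorm_lt //; exact: hN.
Qed.

Lemma cauchy_conv (hc : hcomplete ip) s :
  (forall e, 0 < e -> exists N, forall k j, (N <= k)%N -> (N <= j)%N -> nrm2 (s k - s j) < e) ->
  exists l, conv s l.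
Proof.
move=> h.
have [l hl] : exists l : V, forall e : R, 0 < e -> exists N : nat, forall n : nat,
        (N <= n)%N -> hnorm ip (s n - l) < e.
  apply: hc => e e0.
  have [N hN] := h (e ^+ 2) (exprn_gt0 2 e0); exists N => k j hk hj.
  by rewrite hnorm_lt //; exact: hN.
exists l => e e0.
have se : 0 < Num.sqrt e by rewrite sqrtr_gt0.
have [N hN] := hl _ se; exists N => k hk.
by have := hN k hk; rewrite hnorm_lt // sqr_sqrtr // ltW.
Qed.

Lemma conv_ext s t l : (forall k, s k = t k) -> conv s l -> conv t l.
Proof. by move=> h hs e e0; have [N hN] := hs e e0; exists N => k hk; rewrite -h; exact: hN. Qed.

Lemma conv_shift s l : conv s l -> conv (fun k => s k.+1) l.
Proof. by move=> hs e e0; have [N hN] := hs e e0; exists N => k hk; apply: hN; exact: leqW. Qed.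

Lemma conv_uniq s l l' : conv s l -> conv s l' -> l = l'.
Proof.
move=> h1 h2; apply/eqP; rewrite -subr_eq0; apply/eqP; apply: nrm2_eq0.
apply/eqP; rewrite eq_le nrm2_ge0 andbT; rewrite leNgt; apply/negP => hp.
have e0 : 0 < nrm2 (l - l') / 4 by rewrite divr_gt0.
have [N1 hN1] := h1 _ e0; have [N2 hN2] := h2 _ e0.
have a1 := hN1 (maxn N1 N2) (leq_maxl _ _).
have a2 := hN2 (maxn N1 N2) (leq_maxr _ _).
have := nrm2D (l - s (maxn N1 N2)) (s (maxn N1 N2) - l').
rewrite addrA subrK (nrm2_sym l (s (maxn N1 N2))) => h.
lra.
Qed.

Lemma conv_lin a s1 s2 l1 l2 : conv s1 l1 -> conv s2 l2 ->
  conv (fun k => a *: s1 k + s2 k) (a *: l1 + l2).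
Proof.
move=> h1 h2 e e0.
set c := complex.Re (a * a^*).
have c0 : 0 <= c := nz_ge0 a.
have e1p : 0 < e / (4 * (c + 1)) by rewrite divr_gt0 // mulr_gt0 // ltr_wpDl.
have [N1 hN1] := h1 _ e1p.
have e2p : 0 < e / 4 by rewrite divr_gt0.
have [N2 hN2] := h2 _ e2p.
exists (maxn N1 N2) => k hk.
have a1 := hN1 k (leq_trans (leq_maxl _ _) hk).
have a2 := hN2 k (leq_trans (leq_maxr _ _) hk).
have -> : a *: s1 k + s2 k - (a *: l1 + l2) = a *: (s1 k - l1) + (s2 k - l2).
  by rewrite opprD addrACA -scalerBr.
apply: (le_lt_trans (nrm2D _ _)); rewrite nrm2Z -/c.
have b1 : c * nrm2 (s1 k - l1) <= e / 4.
  apply: (le_trans (ler_wpM2l c0 (ltW a1))).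
  have -> : e / 4 = (c + 1) * (e / (4 * (c + 1))) by field; lra.
  by rewrite ler_wpM2r ?lerDl // ltW.
lra.
Qed.

Lemma ipconv s l u : conv s l -> forall e, 0 < e -> exists N, forall k, (N <= k)%N ->
  complex.Re ((ip u (s k) - ip u l) * (ip u (s k) - ip u l)^*) < e.
Proof.
move=> h e e0.
have e1 : 0 < e / (nrm2 u + 1) by rewrite divr_gt0 // ltr_wpDl ?nrm2_ge0.
have [N hN] := h _ e1; exists N => k hk.
rewrite -(fBr ipL); apply: (le_lt_trans (CS _ _)).
have n0 := nrm2_ge0 u.
have hk' := hN k hk.
apply: (le_lt_trans (ler_wpM2l n0 (ltW hk'))).
have E : (nrm2 u + 1) * (e / (nrm2 u + 1)) = e by field; lra.
by rewrite -[X in _ < X]E ltr_pM2r // ltrDl.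
Qed.

Lemma nzN (a : C) : complex.Re ((- a) * (- a)^*) = complex.Re (a * a^*).
Proof. by rewrite conjN mulrNN. Qed.

Lemma MCT (hc : hcomplete ip) (T : nat -> V -> V) K :
  (forall k, linop (T k)) -> (forall k, psd (T k)) ->
  (forall k v, 0 <= ip v (T k v - T k.+1 v)) -> 0 <= K ->
  (forall v, complex.Re (ip v (T 0 v)) <= K * nrm2 v) ->
  exists L, [/\ linop L, psd L, (forall v, conv (fun k => T k v) (L v)) &
     forall k v, 0 <= ip v (T k v - L v)].
Proof.
move=> hL hP hD K0 hK.
have mono : forall v k d, 0 <= ip v (T k v - T (k + d)%N v).
  move=> v k; elim=> [|d IH]; first by rewrite addn0 subrr (f0r ipL).
  rewrite addnS (_ : T k v - T (k + d).+1 v = (T k v - T (k + d)%N v) + (T (k + d)%N v - T (k + d).+1 v)).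
    by rewrite (fDr ipL) addr_ge0.
  by rewrite addrA subrK.
have mono' : forall v k j, (k <= j)%N -> 0 <= ip v (T k v - T j v).
  by move=> v k j /subnKC <-; exact: mono.
have bnd0 : forall k v, complex.Re (ip v (T k v)) <= K * nrm2 v.
  move=> k v; apply: (le_trans _ (hK v)).
  have := ge0_Re (mono v 0 k); rewrite add0n (fBr ipL) ReB subr_ge0 //.
have diff : forall k j v, (k <= j)%N ->
    nrm2 (T k v - T j v) <= K * (complex.Re (ip v (T k v)) - complex.Re (ip v (T j v))).
  move=> k j v kj.
  have lin : linop (fun w => T k w - T j w).
    by move=> a u w; rewrite (hL k) (hL j) scalerBr; rewrite opprD addrACA.
  have ps : psd (fun w => T k w - T j w) by move=> w; exact: mono'.
  have bd : forall w, complex.Re (ip w (T k w - T j w)) <= K * nrm2 w.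
    move=> w; apply: (le_trans _ (bnd0 k w)).
    by rewrite (fBr ipL) ReB lerBlDr lerDl; apply: ge0_Re; exact: hP.
  by have := KL lin ps K0 bd v; rewrite (fBr ipL) ReB.
have cauchy : forall v, exists l, conv (fun k => T k v) l.
  move=> v; apply: cauchy_conv => // e e0.
  have e1 : 0 < e / (K + 1) by rewrite divr_gt0 // ltr_wpDl.
  have d1 : forall k, complex.Re (ip v (T k.+1 v)) <= complex.Re (ip v (T k v)).
    by move=> k /=; have := ge0_Re (hD k v); rewrite (fBr ipL) ReB subr_ge0.
  have d2 : forall k, 0 <= complex.Re (ip v (T k v)).
    by move=> k /=; apply: ge0_Re; exact: hP.
  have [N hN] := dec_cauchy d1 d2 e1.
  exists N => k j hk hj.
  wlog kj : k j hk hj / (k <= j)%N.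
    move=> W; have [kj|jk] := leqP k j; first exact: W.
    by rewrite nrm2_sym; apply: W => //; exact: ltnW.
  apply: (le_lt_trans (diff k j v kj)).
  have := hN k j hk hj.
  set a := _ - _ => a0.
  apply: (le_lt_trans (ler_wpM2l K0 (ler_norm a))).
  apply: (le_lt_trans (ler_wpM2l K0 (ltW a0))).
  have E : (K + 1) * (e / (K + 1)) = e by field; lra.
  by rewrite -[X in _ < X]E ltr_pM2r // ltrDl.
have [L hLc] := choice cauchy.
have linL : linop L.
  move=> a u w; apply: (conv_uniq (hLc (a *: u + w))).
  apply: (conv_ext (s := fun k => a *: T k u + T k w)); first by move=> k; rewrite (hL k).
  exact: conv_lin.
have lim_ip : forall v j, exists N, forall k, (N <= k)%N -> forall e, True.
  by move=> *; exists 0.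
exists L; split => //.
- move=> v; apply: closed0 => e e0.
  have [N hN] := ipconv v (hLc v) e0.
  by exists (ip v (T N v)); split; [exact: hP | exact: hN].
- move=> k v; apply: closed0 => e e0.
  have [N hN] := ipconv v (hLc v) e0.
  exists (ip v (T k v - T (maxn k N) v)); split; first exact: mono' (leq_maxl _ _).
  rewrite !(fBr ipL) (_ : _ - _ - _ = - (ip v (T (maxn k N) v) - ip v (L v))).
    by rewrite nzN; apply: hN; exact: leq_maxr.
  by ring.
Qed.

Lemma RCM (a b : R) : (a * b)%:C = a%:C * b%:C :> C.
Proof. by rewrite /=; congr (_ +i* _); ring. Qed.
Lemma RCD (a b : R) : (a + b)%:C = a%:C + b%:C :> C.
Proof. by rewrite /=; congr (_ +i* _); ring. Qed.
Lemma RC1 : (1 : R)%:C = 1 :> C. Proof. by []. Qed.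
Lemma RC0 : (0 : R)%:C = 0 :> C. Proof. by []. Qed.
Lemma ReMR (r : R) (z : C) : complex.Re (r%:C * z) = r * complex.Re z.
Proof. by rewrite ReMc ReR ImR mul0r subr0. Qed.

Section Evop.
Implicit Types (p q r : {poly R}) (c : R) (u v w : V).
Variable B : V -> V.
Hypothesis hB : linop B.

Definition evop (p : {poly R}) (v : V) : V :=
  \sum_(i < size p) (p`_i)%:C *: iter i B v.

Lemma iter_lin i : linop (iter i B).
Proof. elim: i => [|i IH] a u v //=; by rewrite IH hB. Qed.

Lemma evopE p N v : (size p <= N)%N ->
  evop p v = \sum_(i < N) (p`_i)%:C *: iter i B v.
Proof.
move=> hN; rewrite /evop (big_ord_widen N (fun i => (p`_i)%:C *: iter i B v) hN).
rewrite big_mkcond; apply: eq_bigr => i _; case: ifP => // /negbT.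
by rewrite -leqNgt => h; rewrite nth_default // RC0 scale0r.
Qed.

Lemma evop_lin p : linop (evop p).
Proof.
move=> a u v; rewrite /evop scaler_sumr -big_split; apply: eq_bigr => i _ /=.
by rewrite (iter_lin i) scalerDr !scalerA mulrC.
Qed.

Lemma evopD p q v : evop (p + q) v = evop p v + evop q v.
Proof.
set N := maxn (size p) (size q).
rewrite (@evopE (p + q) N) ?size_polyD // (@evopE p N) ?leq_maxl //.
rewrite (@evopE q N) ?leq_maxr // -big_split; apply: eq_bigr => i _ /=.
by rewrite coefD RCD scalerDl.
Qed.

Lemma evopZ c p v : evop (c *: p) v = c%:C *: evop p v.
Proof.
rewrite (@evopE (c *: p) (size p)) ?size_scale_leq // /evop scaler_sumr.
by apply: eq_bigr => i _; rewrite coefZ RCM scalerA.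
Qed.

Lemma evop0 v : evop 0 v = 0.
Proof. by rewrite /evop size_poly0 big_ord0. Qed.

Lemma evopN p v : evop (- p) v = - evop p v.
Proof.
have := evopD p (- p) v; rewrite subrr evop0 => h.
by apply/eqP; rewrite -addr_eq0 addrC -h.
Qed.

Lemma evopB p q v : evop (p - q) v = evop p v - evop q v.
Proof. by rewrite evopD evopN. Qed.

Lemma evopC c v : evop c%:P v = c%:C *: v.
Proof.
rewrite (@evopE _ 1) ?size_polyC_leq1 // big_ord1 coefC /=.
done.
Qed.

Lemma evopX v : evop 'X v = B v.
Proof.
rewrite (@evopE _ 2) ?size_polyX // big_ord_recr big_ord1 /= !coefX /=.
by rewrite RC0 scale0r add0r RC1 scale1r.
Qed.

Lemma evop_comm p v : evop p (B v) = B (evop p v).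
Proof.
rewrite /evop (lin_sum hB); apply: eq_bigr => i _.
by rewrite (linZ hB) -iterSr iterS.
Qed.

Lemma evopMX r v : evop (r * 'X) v = evop r (B v).
Proof.
rewrite (@evopE _ (size r).+1); last first.
  by apply: (leq_trans (size_polyMleq _ _)); rewrite size_polyX addn2.
rewrite big_ord_recl coefMX /= RC0 scale0r add0r /evop.
by apply: eq_bigr => i _; rewrite coefMX /= add0n -iterS iterSr.
Qed.

Lemma evopM p q v : evop (p * q) v = evop p (evop q v).
Proof.
elim/poly_ind: p v => [|p c IH] v; first by rewrite mul0r !evop0.
rewrite mulrDl mulrAC evopD evopMX IH mul_polyC evopZ.
by rewrite evopD evopMX evopC evop_comm.
Qed.

Hypothesis hBs : psd B.

Lemma iter_sa i u w : ip (iter i B u) w = ip u (iter i B w).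
Proof.
elim: i u w => [|i IH] u w //=.
by rewrite (psd_sa hB hBs) IH -iterSr iterS.
Qed.

Lemma iter_psd i v : 0 <= ip v (iter i B v).
Proof.
rewrite -(odd_double_half i) -addnn.
case: (odd i) => /=.
- by rewrite add0n iterD -iterS iterSr -iter_sa; apply: hBs.
- rewrite add0n iterD -iter_sa; exact: ipP.
Qed.

Lemma evop_psd p : (forall i, 0 <= p`_i) -> psd (evop p).
Proof.
move=> hp v; rewrite /evop (fsumr ipL); apply: sumr_ge0 => i _.
by rewrite (fZr ipL) mulr_ge0 ?realC_ge0 // iter_psd.
Qed.
End Evop.

Lemma RCB (a b : R) : (a - b)%:C = a%:C - b%:C :> C.
Proof. by rewrite /=; congr (_ +i* _); ring. Qed.

Lemma vec_id1 (v a b : V) : (v - a) - (v - b) = b - a.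
Proof. by rewrite opprB addrC addrA subrK. Qed.
Lemma vec_id2 (v a : V) : v - (v - a) = a.
Proof. by rewrite opprB addrC subrK. Qed.

Lemma vid3 (v w a : V) : v - w - (w - (w + w - (v - a))) = a.
Proof.
rewrite [- (w - _)]opprB [- (v - a)]opprB [w + w + _ - w]addrAC addrK.
by rewrite addrA subrK addrC subrK.
Qed.

Lemma conv_const (l : V) : conv (fun _ => l) l.
Proof. by move=> e e0; exists 0%N => k _; rewrite subrr /nrm2 (f0r ipL). Qed.

Lemma conv_eq s t l l' : (forall k, s k = t k) -> l = l' -> conv s l -> conv t l'.
Proof. by move=> h <-; exact: conv_ext. Qed.

Lemma sqrt_exists (hc : hcomplete ip) A K : linop A -> psd A -> 0 < K ->
  (forall v, complex.Re (ip v (A v)) <= K * nrm2 v) -> exists S, is_pos_sqrt ip A S.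
Proof.
move=> hA pA K0 hK.
pose A' v := (K^-1)%:C *: A v.
pose B v := v - A' v.
have hlinB : linop B.
  move=> a u w; rewrite /B /A' hA scalerDr !scalerA mulrC -scalerA.
  by rewrite opprD addrACA -scalerBr.
have ipB v : ip v (B v) = (nrm2 v - K^-1 * complex.Re (ip v (A v)))%:C.
  by rewrite /B /A' (fBr ipL) (fZr ipL) ip_self {1}(ge0_real (pA v)) -RCM -RCB.
have psdB : psd B.
  move=> v; rewrite ipB realC_ge0 subr_ge0 ler_pdivrMl //; exact: hK.
have Bbnd v : complex.Re (ip v (B v)) <= nrm2 v.
  rewrite ipB ReR lerBlDr lerDl; apply: mulr_ge0; [by rewrite invr_ge0 ltW | exact: (ge0_Re (pA v))].
pose Y k := evop B (sqpoly R k).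
have Ylin k : linop (Y k) := evop_lin hlinB _.
have Ypsd k : psd (Y k) := evop_psd hlinB psdB (sqpoly_nn R k).
have Ysa k : sa (Y k) := psd_sa (Ylin k) (Ypsd k).
have Y0 v : Y 0%N v = 0 by exact: evop0.
have Yrec k v : Y k.+1 v = (2^-1)%:C *: (B v + Y k (Y k v)).
  by rewrite /Y /= evopZ evopD evopX evopM.
have Ymono k v : 0 <= ip v (Y k.+1 v - Y k v).
  by rewrite /Y -evopB; exact: (evop_psd hlinB psdB (sqdiff R k) v).
have Ybnd k v : complex.Re (ip v (Y k v)) <= nrm2 v.
  elim: k v => [|k IH] v; first by rewrite Y0 (f0r ipL) nrm2_ge0.
  rewrite Yrec (fZr ipL) ReMR (fDr ipL) ReD.
  have h1 := Bbnd v.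
  have h2 : complex.Re (ip v (Y k (Y k v))) <= nrm2 v.
    rewrite -(Ysa k) ip_self ReR.
    have hb : forall w, complex.Re (ip w (Y k w)) <= 1 * nrm2 w by move=> w; rewrite mul1r.
    apply: (le_trans (KL (Ylin k) (Ypsd k) ler01 hb v)); rewrite mul1r; exact: IH.
  lra.
pose T k v := v - Y k v.
have Tlin k : linop (T k).
  by move=> a u w; rewrite /T (Ylin k) opprD addrACA -scalerBr.
have Tpsd k : psd (T k).
  move=> v; rewrite /T (fBr ipL) ip_self (ge0_real (Ypsd k v)) -RCB realC_ge0 subr_ge0.
  exact: Ybnd.
have Tdec k v : 0 <= ip v (T k v - T k.+1 v) by rewrite /T vec_id1.
have T0b v : complex.Re (ip v (T 0%N v)) <= 1 * nrm2 v by rewrite /T Y0 subr0 mul1r.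
have [L [linL psdL convL LleT]] := MCT hc Tlin Tpsd Tdec ler01 T0b.
have Lb v : complex.Re (ip v (L v)) <= 1 * nrm2 v.
  have := ge0_Re (LleT 0%N v); rewrite /T Y0 subr0 (fBr ipL) ReB subr_ge0 mul1r //.
pose Yl v := v - L v.
have convY v : conv (fun k => Y k v) (Yl v).
  apply: (conv_eq _ _ (conv_lin (-1) (convL v) (conv_const v))).
    by move=> k; rewrite /T scaleN1r opprB subrK.
  by rewrite /Yl scaleN1r addrC.
have Ycon k w : nrm2 (Y k w) <= nrm2 w.
  have hb : forall w, complex.Re (ip w (Y k w)) <= 1 * nrm2 w by move=> w'; rewrite mul1r.
  by have := KL2 (Ylin k) (Ypsd k) ler01 hb w; rewrite expr1n mul1r.
have convYY v : conv (fun k => Y k (Y k v)) (Yl (Yl v)).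
  move=> e e0; have e4 : 0 < e / 4 by rewrite divr_gt0.
  have [N1 h1] := convY v _ e4; have [N2 h2] := convY (Yl v) _ e4.
  exists (maxn N1 N2) => k hk.
  have a1 := h1 k (leq_trans (leq_maxl _ _) hk).
  have a2 := h2 k (leq_trans (leq_maxr _ _) hk).
  have -> : Y k (Y k v) - Yl (Yl v) = Y k (Y k v - Yl v) + (Y k (Yl v) - Yl (Yl v)).
    by rewrite (linB (Ylin k)) addrA subrK.
  apply: (le_lt_trans (nrm2D _ _)).
  have := Ycon k (Y k v - Yl v); lra.
have fixpt v : Yl v = (2^-1)%:C *: (B v + Yl (Yl v)).
  apply: (conv_uniq (conv_shift (convY v))).
  apply: (conv_eq _ _ (conv_lin (2^-1)%:C (convYY v) (conv_const ((2^-1)%:C *: B v)))).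
    by move=> k; rewrite Yrec [in RHS]scalerDr addrC.
  by rewrite [in RHS]scalerDr addrC.
have linYl : linop Yl.
  by move=> a u w; rewrite /Yl linL opprD addrACA -scalerBr.
have LE v : L v = v - Yl v by rewrite /Yl vec_id2.
have fix2 v : Yl (Yl v) = Yl v + Yl v - B v.
  have := fixpt v; move/(congr1 (fun z => (2%:R : R)%:C *: z)).
  rewrite scalerA -RCM mulfV ?pnatr_eq0 // RC1 scale1r (RCD 1 1) RC1 scalerDl scale1r => ->.
  by rewrite addrAC subrr add0r.
have LL v : L (L v) = A' v.
  by rewrite [L (L v)]LE [L v]LE (linB linYl) fix2 /B vid3.
pose S v := (Num.sqrt K)%:C *: L v.
have linS : linop S by move=> a u w; rewrite /S linL scalerDr !scalerA mulrC.
exists S; split; last first.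
  move=> v; rewrite /S (linZ linL) LL /A' !scalerA -!RCM.
  by rewrite -expr2 (sqr_sqrtr (ltW K0)) mulfV ?gt_eqF // RC1 scale1r.
split.
  apply: (@nrm2_bounded _ K linS (ltW K0)) => v.
  rewrite /S nrm2ZR (sqr_sqrtr (ltW K0)); apply: ler_wpM2l; first exact: ltW.
  by have := KL2 linL psdL ler01 Lb v; rewrite expr1n mul1r.
move=> v; rewrite /S (fZr ipL) mulr_ge0 // realC_ge0 sqrtr_ge0 //.
Qed.

Lemma pos_bound T : positive_op ip T ->
  exists K, 0 < K /\ forall v, complex.Re (ip v (T v)) <= K * nrm2 v.
Proof.
case=> hb hp; have [M [M0 hM]] := bounded_nrm2 hb.
exists (M + 1); split; first by rewrite ltr_wpDl.
move=> v; have := CS v (T v); have := Re2_le_nz (ip v (T v)).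
have := hM v; have := nrm2_ge0 v; have := nrm2_ge0 (T v).
have := ge0_Re (hp v).
set q := complex.Re _; set n := nrm2 v; set a := nrm2 (T v); set z := complex.Re (_ * _).
move=> q0 a0 n0 haM hqz hz.
have h1 : n * a <= n * (M * n) by rewrite ler_wpM2l.
have h : q ^+ 2 <= M * n ^+ 2 by rewrite expr2; nra.
rewrite expr2 in hqz h.
nra.
Qed.

Lemma opsqrt_spec (hc : hcomplete ip) A : positive_op ip A -> is_pos_sqrt ip A (opsqrt ip A).
Proof.
move=> hA; rewrite /opsqrt; case: pselect => [h|h]; first exact: (proj2_sig (cid h)).
exfalso; apply: h; have [K [K0 hK]] := pos_bound hA.
exact: (sqrt_exists hc (proj1 (proj1 hA)) (proj2 hA) K0 hK).
Qed.

Section Tree.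
Variable m : nat.
Variable P : 'I_m -> V -> V.
Hypothesis hP : forall j, orth_proj ip (P j).
Variable R0 : V -> V.
Hypothesis hR0 : positive_op ip R0.
Hypothesis hc : hcomplete ip.

Let Plin j : linop (P j). Proof. by case: (hP j) => [[]]. Qed.
Let Pidem j v : P j (P j v) = P j v. Proof. by case: (hP j). Qed.
Let Psa j u v : ip (P j u) v = ip u (P j v). Proof. by case: (hP j). Qed.

Lemma Rrev_cons j l : Rrev ip P R0 (j :: l) =
  (fun v => opsqrt ip (Rrev ip P R0 l) (opsqrt ip (Rrev ip P R0 l) v
     - P j (opsqrt ip (Rrev ip P R0 l) v))).
Proof. by []. Qed.

Lemma Rrev_pos l : positive_op ip (Rrev ip P R0 l).
Proof.
elim: l => [|j l IH] //=.
have [[Sb Spsd] SS] := opsqrt_spec hc IH.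
set S := opsqrt ip _ in Sb Spsd SS *.
have Slin : linop S := proj1 Sb.
have Ssa : sa S := psd_sa Slin Spsd.
have [Ms [Ms0 hMs]] := bounded_nrm2 Sb.
have [Pb _ _] := hP j.
have [Mp [Mp0 hMp]] := bounded_nrm2 Pb.
have lin : linop (fun v => S (S v - P j (S v))).
  by move=> a u w; rewrite Slin (Plin j) opprD addrACA -scalerBr Slin.
split.
  apply: (nrm2_bounded lin (K := Ms * (2 * (Ms + Mp * Ms)))).
    by rewrite !mulr_ge0 // addr_ge0 // mulr_ge0.
  move=> v; apply: (le_trans (hMs _)); rewrite -mulrA ler_wpM2l //.
  apply: (le_trans (nrm2B _ _)); rewrite -mulrA ler_wpM2l //.
  rewrite mulrDl; apply: lerD; first exact: hMs.
  rewrite -mulrA; apply: (le_trans (hMp _)); rewrite ler_wpM2l //.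
move=> v; rewrite -Ssa.
set u := S v.
rewrite -{1}(subrK (P j u) u) (fDl ipL ipH) Psa (linB (Plin j)) Pidem subrr (f0r ipL) addr0.
exact: ipP.
Qed.

Definition Dpart j l v := opsqrt ip (Rrev ip P R0 l) (P j (opsqrt ip (Rrev ip P R0 l) v)).

Lemma Rrev_split j l v : Rrev ip P R0 l v = Rrev ip P R0 (j :: l) v + Dpart j l v.
Proof.
have [[Sb Spsd] SS] := opsqrt_spec hc (Rrev_pos l).
rewrite Rrev_cons /Dpart (linB (proj1 Sb)) subrK; exact/esym/SS.
Qed.

Lemma Dpart_psd j l v : 0 <= ip v (Dpart j l v).
Proof.
have [[Sb Spsd] SS] := opsqrt_spec hc (Rrev_pos l).
rewrite /Dpart -(psd_sa (proj1 Sb) Spsd) -Pidem -Psa; exact: ipP.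
Qed.

Lemma Rrev_lin l : linop (Rrev ip P R0 l).
Proof. exact: (proj1 (proj1 (Rrev_pos l))). Qed.
Lemma Rrev_psd l : psd (Rrev ip P R0 l).
Proof. exact: (proj2 (Rrev_pos l)). Qed.

Lemma Rrev_le0 l v : complex.Re (ip v (Rrev ip P R0 l v)) <= complex.Re (ip v (R0 v)).
Proof.
elim: l => [|j l IH] //; apply: le_trans IH.
rewrite (Rrev_split j l v) (fDr ipL) ReD lerDl; exact: ge0_Re (Dpart_psd j l v).
Qed.

Lemma prefixS (om : nat -> 'I_m) k : rev (Defs.prefix om k.+1) = om k :: rev (Defs.prefix om k).
Proof. by rewrite /Defs.prefix mkseqS rev_rcons. Qed.

Lemma Rw_S (om : nat -> 'I_m) k v : Rw ip P R0 (Defs.prefix om k) v =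
  Rw ip P R0 (Defs.prefix om k.+1) v + Delta ip P R0 k.+1 om v.
Proof.
rewrite /Delta /Rw /Dw prefixS; exact: Rrev_split.
Qed.

Lemma Delta_psd (om : nat -> 'I_m) k v : 0 <= ip v (Delta ip P R0 k.+1 om v).
Proof. rewrite /Delta /Dw prefixS; exact: Dpart_psd. Qed.

Lemma Rinf_conv (om : nat -> 'I_m) :
  strong_limit ip (fun k => Rw ip P R0 (Defs.prefix om k)) (Rinf ip P R0 om).
Proof.
rewrite /Rinf /slim; case: pselect => [h|h]; first exact: (proj2_sig (cid h)).
exfalso; apply: h.
have [K [K0 hK]] := pos_bound hR0.
have Tl k : linop (Rw ip P R0 (Defs.prefix om k)) := Rrev_lin _.
have Tp k : psd (Rw ip P R0 (Defs.prefix om k)) := Rrev_psd _.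
have Td k v : 0 <= ip v (Rw ip P R0 (Defs.prefix om k) v - Rw ip P R0 (Defs.prefix om k.+1) v).
  by rewrite (Rw_S om k v) addrAC subrr add0r; exact: Delta_psd.
have [L [_ _ cL _]] := MCT hc Tl Tp Td (ltW K0) hK.
by exists L; apply/strong_limitP.
Qed.

End Tree.
End Hilb.

Section Meas.
Variable R : realType.
Variable n : nat.
Lemma cyl_meas (w : seq 'I_n.+2) : measurable (cylinder w : set (Omega n)).
Proof. apply: sub_sigma_algebra; by exists w. Qed.

Lemma prefix_meas (k : nat) (H : seq 'I_n.+2 -> R) :
  measurable_fun setT (fun om : Omega n => H (Defs.prefix om k)).
Proof.
move=> _ B mB; rewrite setTI.
have -> : (fun om : Omega n => H (Defs.prefix om k)) @^-1` B =
   \bigcup_(w : seq 'I_n.+2) (if pselect (size w = k /\ B (H w)) then cylinder w else set0).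
  apply/seteqP; split => om /=.
  - move=> hB; exists (Defs.prefix om k) => //.
    case: pselect => [hh|hh]; first by rewrite /cylinder /= size_mkseq.
    by exfalso; apply: hh; split; [exact: size_mkseq | exact: hB].
  - case=> w Tw; case: pselect => [[hs hb]|hh] // hcy.
    by rewrite /cylinder /= hs in hcy; rewrite hcy.
apply: countable_bigcupT_measurable; first exact: countableP.
by move=> w; case: pselect => hh; [exact: cyl_meas | exact: measurable0].
Qed.
End Meas.

Local Close Scope complex_scope.
Local Open Scope ring_scope.

Theorem proposition4p4
  (R : realType) (V : lmodType R[i]) (ip : V -> V -> R[i])
  (hH : is_hilbert ip)
  (n : nat) (P : 'I_n.+2 -> V -> V) (hP : forall j, orth_proj ip (P j))
  (R0 : V -> V) (hR0 : positive_op ip R0)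
  (q : 'I_n.+2 -> R) (hq0 : forall j, 0 <= q j) (hq1 : \sum_(j < n.+2) q j = 1)
  (x : V) (hx : 0 < ip x (R0 x))
  (nu : probability (Omega n) R)
  (hnu : forall w : seq 'I_n.+2,
      nu (cylinder w) = (cylprob ip P R0 x q w)%:E) :
  let A := fun (k : nat) (om : Omega n) =>
             complex.Re (ip x (Delta ip P R0 k om x)) in
  let Einf := (\int[nu]_om (complex.Re (ip x (Rinf ip P R0 om x)))%:E)%E in
  (forall k : nat, (1 <= k)%N ->
     (forall om, 0 <= A k om) /\ nu.-integrable setT (fun om => (A k om)%:E)) /\
  nu.-integrable setT (fun om => (complex.Re (ip x (Rinf ip P R0 om x)))%:E) /\
  (complex.Re (ip x (R0 x)))%:E
    = (Einf + \sum_(1 <= k <oo) \int[nu]_om (A k om)%:E)%E /\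
  (\sum_(1 <= k <oo) \int[nu]_om (A k om)%:E)%E
    = ((complex.Re (ip x (R0 x)))%:E - Einf)%E /\
  (\sum_(1 <= k <oo) \int[nu]_om (A k om)%:E < +oo)%E.
Proof.
move=> A Einf.
have [hip hc] := hH.
have ipL : forall u a v w, ip u (a *: v + w) = a * ip u v + ip u w by case: hip.
set c := complex.Re (ip x (R0 x)).
have c0 : 0 <= c by apply: ge0_Re; exact: (proj2 hR0).
pose f k (om : Omega n) := complex.Re (ip x (Rw ip P R0 (Defs.prefix om k) x)).
pose g (om : Omega n) := complex.Re (ip x (Rinf ip P R0 om x)).
have F1 k om : f k om = f k.+1 om + A k.+1 om.
  by rewrite /f /A (Rw_S hip hP hR0 hc om k x) (fDr ipL) ReD.
have F2 k om : 0 <= A k.+1 om by apply: ge0_Re; exact: (Delta_psd hip hP hR0 hc om k x).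
have F3 k om : 0 <= f k om by apply: ge0_Re; exact: (Rrev_psd hip hP hR0 hc _ x).
have F4 k om : f k om <= c by exact: (Rrev_le0 hip hP hR0 hc _ x).
have F0 om : f 0%N om = c by [].
have Fc om : (fun k => f k om) @ \oo --> (g om : R).
  apply: eps_cvg => e e0.
  have hs := proj1 (strong_limitP _ _ _) (Rinf_conv hip hP hR0 hc om) x.
  have [N hN] := ipconv hip x hs (exprn_gt0 2 e0).
  exists N => k hk; have hz := hN k hk.
  have := Re2_le_nz (ip x (Rw ip P R0 (Defs.prefix om k) x) - ip x (Rinf ip P R0 om x)).
  rewrite ReB -/(f k om) -/(g om) => h.
  rewrite ltr_norml; apply/andP; split; nra.
have G0 om : 0 <= g om.
  rewrite leNgt; apply/negP => hlt.
  have gp : 0 < - g om by rewrite oppr_gt0.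
  have [N hN] := cvg_eps (Fc om) gp.
  have := hN N (leqnn N); rewrite ltr_norml => /andP[h1 h2]; have := F3 N om; lra.
have Gc om : g om <= c.
  rewrite leNgt; apply/negP => hlt.
  have gp : 0 < g om - c by rewrite subr_gt0.
  have [N hN] := cvg_eps (Fc om) gp.
  have := hN N (leqnn N); rewrite ltr_norml => /andP[h1 h2]; have := F4 N om; lra.
have mf k : measurable_fun setT (f k).
  exact: (prefix_meas k (fun w => complex.Re (ip x (Rw ip P R0 w x)))).
have mA k : measurable_fun setT (A k).
  exact: (prefix_meas k (fun w => complex.Re (ip x (Dw ip P R0 w x)))).
have mg : measurable_fun setT g := measurable_realfun.measurable_fun_cvg mf (fun om _ => Fc om).
have intb (h : Omega n -> R) : measurable_fun setT h -> (forall om, 0 <= h om <= c) ->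
    nu.-integrable setT (fun om => (h om)%:E).
  move=> mh hb; apply: (@le_integrable _ _ _ nu setT measurableT (fun om => (h om)%:E) (EFin \o cst c)).
  - exact/measurable_realfun.measurable_EFinP.
  - by move=> om _ /=; have /andP[h0 h1] := hb om; rewrite lee_fin !ger0_norm.

  - exact: finite_measure_integrable_cst.
have If k : nu.-integrable setT (fun om => (f k om)%:E).
  by apply: intb => // om; rewrite F3 F4.
have Ig : nu.-integrable setT (fun om => (g om)%:E).
  by apply: intb => // om; rewrite G0 Gc.
have IA k : (1 <= k)%N -> nu.-integrable setT (fun om => (A k om)%:E).
  case: k => // k _; apply: intb => // om; rewrite F2 /=.
  have := F1 k om; have := F3 k.+1 om; have := F4 k om; lra.
split.
  by case=> // k _; split; [exact: F2 | exact: IA].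
split; first exact: Ig.
pose J k := (\int[nu]_om (f k om)%:E)%E.
have Jfin k : J k \is a fin_num := integrable_fin_num measurableT (If k).
pose j k := fine (J k).
have Je k : J k = (j k)%:E by rewrite /j fineK.
have IAk k : (\int[nu]_om (A k.+1 om)%:E)%E = (j k - j k.+1)%:E.
  rewrite (eq_integral (fun om => (f k om)%:E - (f k.+1 om)%:E)%E); last first.
    by move=> om _; rewrite -EFinB; congr EFin; have := F1 k om; lra.
  rewrite (integralB_EFin measurableT (If k) (If k.+1)).
  by move: (Je k) (Je k.+1); rewrite /J => -> ->; rewrite EFinB.
have J0 : j 0%N = c.
  rewrite /j /J (eq_integral (fun _ => c%:E)); last by move=> om _; rewrite F0.
  rewrite integral_cst //; set X := (X in fine (_ * X)).
  have -> : X = 1%E by exact: probability_setT.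
  by rewrite mule1.
have PS N : (\sum_(1 <= i < N.+1) \int[nu]_om (A i om)%:E)%E = (j 0%N - j N)%:E.
  elim: N => [|N IH]; first by rewrite big_geq // subrr.
  by rewrite big_nat_recr //= IH IAk -EFinD; congr EFin; ring.
have EinfFin : Einf \is a fin_num := integrable_fin_num measurableT Ig.
set ji := fine Einf.
have EinfE : Einf = ji%:E by rewrite /ji fineK.
have DC : J N @[N --> \oo] --> Einf.
  apply: (@dominated_cvg _ _ _ nu setT measurableT (fun N om => (f N om)%:E)
     (fun om => (g om)%:E) (EFin \o cst c)).
  - by move=> N; exact/measurable_realfun.measurable_EFinP.
  - move=> om _; apply/fine_cvgP; split; first by apply: nearW.
    exact: Fc.
  - by [].
  - exact: finite_measure_integrable_cst.
  - by move=> N om _ /=; rewrite lee_fin ger0_norm ?F3 ?F4.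
have DCr : j N @[N --> \oo] --> ji.
  by move: DC; rewrite EinfE => /fine_cvgP [_ h].
have Scv : (fun N => (\sum_(1 <= i < N) \int[nu]_om (A i om)%:E)%E) @ \oo --> (c - ji)%:E.
  rewrite -cvg_shiftS /=.
  have -> : (fun N => (\sum_(1 <= i < N.+1) \int[nu]_om (A i om)%:E)%E) = (fun N => (c - j N)%:E).
    by apply: funext => N; rewrite PS J0.
  apply: cvg_EFin; first by apply: nearW.
  apply: cvgB; [exact: cvg_cst | exact: DCr].
have Slim : (\sum_(1 <= i <oo) \int[nu]_om (A i om)%:E)%E = (c - ji)%:E.
  exact: cvg_lim Scv.
rewrite Slim EinfE; split; first by rewrite -EFinD; congr EFin; ring.
split; first by rewrite EFinB.
exact: ltry.
Qed.
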